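(* Let $(H,\sigma)$ be a coquasitriangular Hopf algebra, $X,A\subseteq H$ sub-Hopf algebras, $H_{X,A}=H_{l_X}H_{r_A}\subseteq H^0$, and consider the generalized quantum double $D(H_{X,A}^{\rm cop},X)$ with respect to the evaluation pairing $\langle\varphi,y\rangle=\varphi(y)$ ($\varphi\in H_{X,A}$, $y\in X$). Then the map $\pi:D(H_{X,A}^{\rm cop},X)\to H_{X,A}^{\rm cop}$, $\pi(l_xr_a\otimes y)=l_xr_a\,l_{S^{-1}(y)}$ ($x,y\in X$, $a\in A$), is a Hopf algebra morphism with $\pi\circ i={\rm Id}$, where $i(\varphi)=\varphi\otimes 1$.
   Context: Sweedler notation. A CQT Hopf algebra $(H,\sigma)$ has a convolution invertible bilinear $\sigma:H\otimes H\to k$ with $\sigma(hh',g)=\sigma(h,g_1)\sigma(h',g_2)$, $\sigma(g,hh')=\sigma(g_2,h)\sigma(g_1,h')$, $\sigma(1,h)=\sigma(h,1)=\varepsilon(h)$, $\sigma(h_1,h'_1)h_2h'_2=h'_1h_1\sigma(h_2,h'_2)$; its antipode $S$ is bijective. In the finite dual $H^0$: $l_x=\sigma(-,x)$, $r_a=\sigma(a,-)$, $H_{l_X}=\{l_x\mid x\in X\}$, $H_{r_A}=\{r_a\mid a\in A\}$, and $H_{X,A}=H_{l_X}H_{r_A}=H_{r_A}H_{l_X}$ is a sub-Hopf algebra of $H^0$ (with $l_{xy}=l_yl_x$, $\Delta(l_x)=l_{x_1}\otimes l_{x_2}$, $S(l_x)=l_{S^{-1}(x)}$, $r_{ab}=r_ar_b$,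 $\Delta(r_a)=r_{a_2}\otimes r_{a_1}$, $S(r_a)=r_{S^{-1}(a)}$). For Hopf algebras $U,V$ with bijective antipodes and a pairing $\langle\,,\rangle$, $D(U^{\rm cop},V)$ is the Hopf algebra on $U\otimes V$ with unit $1\otimes1$, multiplication $(m\otimes x)(n\otimes y)=\langle n_3,x_1\rangle\langle S_U^{-1}(n_1),x_3\rangle mn_2\otimes x_2y$ and comultiplication $\Delta(m\otimes x)=(m_2\otimes x_1)\otimes(m_1\otimes x_2)$ (subscripts in $U$, $V$); here $U=H_{X,A}$, $V=X$. *)

(* Defs.v *)
(* A minimal, honest framework for Hopf algebras over a
   field k, with comultiplication given by (representatives of) elements of
   H ⊗ H as finite lists of pairs; tensor equality is the universal property
   of the tensor product (equality under every bilinear map). *)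
From HB Require Import structures.
From mathcomp Require Import all_boot all_order all_algebra.
From Stdlib Require List.
Set Implicit Arguments.
Unset Strict Implicit.
Unset Printing Implicit Defensive.
Import GRing.Theory.
Local Open Scope ring_scope.

Definition linf {k : fieldType} {V : lmodType k} (f : V -> k) : Prop :=
  forall a u v, f (a *: u + v) = a * f u + f v.

Definition bilinf {k : fieldType} {V : lmodType k} (s : V -> V -> k) : Prop :=
  (forall a u u' v, s (a *: u + u') v = a * s u v + s u' v) /\
  (forall a u v v', s u (a *: v + v') = a * s u v + s u v').

Definition bilin {k : fieldType} {V W : lmodType k} (B : V -> V -> W) : Prop :=
  (forall a u u' v, B (a *: u + u') v = a *: B u v + B u' v) /\
  (forall a u v v', B u (a *: v + v') = a *: B u v + B u v').

Definition trilin {k : fieldType} {V W : lmodType k} (T : V -> V -> V -> W) : Prop :=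
  [/\ (forall a u u' v w, T (a *: u + u') v w = a *: T u v w + T u' v w),
      (forall a u v v' w, T u (a *: v + v') w = a *: T u v w + T u v' w) &
      (forall a u v w w', T u v (a *: w + w') = a *: T u v w + T u v w')].

(* equality of the elements  sum_i s_i.1 ⊗ s_i.2  and  sum_j t_j.1 ⊗ t_j.2
   of V ⊗ V (universal property of the tensor product) *)
Definition teq2 {k : fieldType} {V : lmodType k} (s t : seq (V * V)) : Prop :=
  forall (W : lmodType k) (B : V -> V -> W), bilin B ->
    \sum_(p <- s) B p.1 p.2 = \sum_(p <- t) B p.1 p.2.

Definition teq3 {k : fieldType} {V : lmodType k} (s t : seq (V * V * V)) : Prop :=
  forall (W : lmodType k) (T : V -> V -> V -> W), trilin T ->
    \sum_(p <- s) T p.1.1 p.1.2 p.2 = \sum_(p <- t) T p.1.1 p.1.2 p.2.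

(* (H, cm, eps, S) is a Hopf algebra over k; cm h is a representative
   sum_i (h_i1 ⊗ h_i2) of Δ(h) ∈ H ⊗ H (Sweedler: h_1 ⊗ h_2). *)
Record is_hopf {k : fieldType} {H : algType k}
    (cm : H -> seq (H * H)) (eps : H -> k) (S : H -> H) : Prop := {
  cm_lin : forall a u v,
    teq2 (cm (a *: u + v)) ([seq (a *: p.1, p.2) | p <- cm u] ++ cm v);
  cm_1 : teq2 (cm 1) [:: (1, 1)];
  cm_mul : forall u v,
    teq2 (cm (u * v)) [seq (p.1 * q.1, p.2 * q.2) | p <- cm u, q <- cm v];
  cm_coassoc : forall h,
    teq3 [seq (q.1, q.2, p.2) | p <- cm h, q <- cm p.1]
         [seq (p.1, q.1, q.2) | p <- cm h, q <- cm p.2];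
  eps_lin : linf eps;
  eps_1 : eps 1 = 1;
  eps_mul : forall u v, eps (u * v) = eps u * eps v;
  counitl : forall h, \sum_(p <- cm h) eps p.1 *: p.2 = h;
  counitr : forall h, \sum_(p <- cm h) eps p.2 *: p.1 = h;
  S_lin : forall a u v, S (a *: u + v) = a *: S u + S v;
  antipodel : forall h, \sum_(p <- cm h) S p.1 * p.2 = eps h *: 1;
  antipoder : forall h, \sum_(p <- cm h) p.1 * S p.2 = eps h *: 1 }.

Record is_cqt {k : fieldType} {H : algType k}
    (cm : H -> seq (H * H)) (eps : H -> k) (sigma : H -> H -> k) : Prop := {
  cqt_bilin : bilinf sigma;
  cqt_inv : exists tau : H -> H -> k, bilinf tau /\
    (forall h g,
      \sum_(p <- cm h) \sum_(q <- cm g) sigma p.1 q.1 * tau p.2 q.2 = eps h * eps g /\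
      \sum_(p <- cm h) \sum_(q <- cm g) tau p.1 q.1 * sigma p.2 q.2 = eps h * eps g);
  cqt_mull : forall h h' g,
    sigma (h * h') g = \sum_(q <- cm g) sigma h q.1 * sigma h' q.2;
  cqt_mulr : forall g h h',
    sigma g (h * h') = \sum_(q <- cm g) sigma q.2 h * sigma q.1 h';
  cqt_unit : forall h, sigma 1 h = eps h /\ sigma h 1 = eps h;
  cqt_comm : forall h h',
    \sum_(p <- cm h) \sum_(q <- cm h') sigma p.1 q.1 *: (p.2 * q.2) =
    \sum_(p <- cm h) \sum_(q <- cm h') sigma p.2 q.2 *: (q.1 * p.1) }.

Record sub_hopf {k : fieldType} {H : algType k}
    (cm : H -> seq (H * H)) (S Sinv : H -> H) (P : H -> Prop) : Prop := {
  sh_1 : P 1;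
  sh_lin : forall a u v, P u -> P v -> P (a *: u + v);
  sh_mul : forall u v, P u -> P v -> P (u * v);
  sh_cm : forall u, P u -> exists s : seq (H * H),
            (forall p, List.In p s -> P p.1 /\ P p.2) /\ teq2 s (cm u);
  sh_S : forall u, P u -> P (S u);
  sh_Sinv : forall u, P u -> P (Sinv u) }.

(* product of H^0 (convolution):  (f g)(h) = f(h_1) g(h_2) *)
Definition conv {k : fieldType} {H : algType k} (cm : H -> seq (H * H))
    (f g : H -> k) : H -> k :=
  fun h => \sum_(p <- cm h) f p.1 * g p.2.

Definition lfun {k : fieldType} {H : algType k} (sigma : H -> H -> k) (x : H)
  : H -> k := fun h => sigma h x.
Definition rfun {k : fieldType} {H : algType k} (sigma : H -> H -> k) (a : H)
  : H -> k := fun h => sigma a h.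

(* membership in H_{X,A} = H_{l_X} H_{r_A} (span of the products l_x r_a) *)
Definition inHXA {k : fieldType} {H : algType k} (cm : H -> seq (H * H))
    (sigma : H -> H -> k) (X A : H -> Prop) (f : H -> k) : Prop :=
  exists l : seq (H * H), (forall p, List.In p l -> X p.1 /\ A p.2) /\
    forall h, f h = \sum_(p <- l) conv cm (lfun sigma p.1) (rfun sigma p.2) h.

(* Δ(f) = sum_i s_i.1 ⊗ s_i.2 in H^0 ⊗ H^0 with components in U :
   f(a b) = sum_i s_i.1(a) s_i.2(b) *)
Definition dual_cm_rep {k : fieldType} {H : algType k} (U : (H -> k) -> Prop)
    (f : H -> k) (s : seq ((H -> k) * (H -> k))) : Prop :=
  (forall p, List.In p s -> U p.1 /\ U p.2) /\
  forall a b, f (a * b) = \sum_(p <- s) p.1 a * p.2 b.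

(* An element sum_i t_i.1 ⊗ t_i.2 of H_{X,A} ⊗ X is represented by a list t. *)
Definition inD {k : fieldType} {H : algType k} (cm : H -> seq (H * H))
    (sigma : H -> H -> k) (X A : H -> Prop) (t : seq ((H -> k) * H)) : Prop :=
  forall p, List.In p t -> inHXA cm sigma X A p.1 /\ X p.2.

Definition delta2 {k : fieldType} {H : algType k} (cm : H -> seq (H * H)) (h : H)
  : seq (H * H * H) := [seq (q.1, q.2, p.2) | p <- cm h, q <- cm p.1].

(* multiplication of D:
   (m ⊗ x)(n ⊗ y) = <n_3, x_1> <S_U^{-1}(n_1), x_3> m n_2 ⊗ x_2 y,
   where the pairing is evaluation and S_U^{-1}(φ) = φ ∘ S^{-1}, so that
   sum_(n) <n_3,x_1><S_U^{-1}(n_1),x_3> n_2 = (h |-> n(S^{-1}(x_3) h x_1)). *)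
Definition mulD {k : fieldType} {H : algType k} (cm : H -> seq (H * H))
    (Sinv : H -> H) (t t' : seq ((H -> k) * H)) : seq ((H -> k) * H) :=
  flatten [seq flatten [seq
     [seq (conv cm p.1 (fun h => q.1 (Sinv r.2 * h * r.1.1)), r.1.2 * q.2)
        | r <- delta2 cm p.2]
     | q <- t'] | p <- t].

(* comultiplication of D: Δ(m ⊗ x) = (m_2 ⊗ x_1) ⊗ (m_1 ⊗ x_2),
   given representatives dm f of Δ_{H_{X,A}}(f) = f_1 ⊗ f_2 *)
Definition deltaD {k : fieldType} {H : algType k} (cm : H -> seq (H * H))
    (dm : (H -> k) -> seq ((H -> k) * (H -> k))) (t : seq ((H -> k) * H))
  : seq (((H -> k) * H) * ((H -> k) * H)) :=
  flatten [seq [seq ((r.2, q.1), (r.1, q.2)) | r <- dm p.1, q <- cm p.2] | p <- t].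

(* the map π : D → H_{X,A}^cop,  π(φ ⊗ y) = φ l_{S^{-1}(y)}, extended linearly
   (on the spanning elements φ = l_x r_a this is the paper's formula) *)
Definition piD {k : fieldType} {H : algType k} (cm : H -> seq (H * H))
    (sigma : H -> H -> k) (Sinv : H -> H) (t : seq ((H -> k) * H)) : H -> k :=
  fun h => \sum_(p <- t) conv cm p.1 (lfun sigma (Sinv p.2)) h.

(* Main.v *)
Require Import Defs.
From HB Require Import structures.
From mathcomp Require Import all_boot all_order all_algebra.
From Stdlib Require List.
From mathcomp Require Import ring.
Import GRing.Theory.
Local Open Scope ring_scope.

Section Frame.
Variables (k : fieldType) (H : algType k).
Variable cm : H -> seq (H * H).
Variables (eps : H -> k) (S : H -> H).
Hypothesis hH : is_hopf cm eps S.

Definition lin {W : lmodType k} (f : H -> W) :=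
  forall a u v, f (a *: u + v) = a *: f u + f v.

Section Lin.
Variable W : lmodType k.
Implicit Types f : H -> W.

Lemma lin0 f : lin f -> f 0 = 0.
Proof. move=> Hf; have := Hf 1 0 0; rewrite !scale1r addr0 => e.
by apply: (addrI (f 0)); rewrite addr0 -e. Qed.
Lemma linD f u v : lin f -> f (u + v) = f u + f v.
Proof. by move=> Hf; have := Hf 1 u v; rewrite !scale1r. Qed.
Lemma linZ f a u : lin f -> f (a *: u) = a *: f u.
Proof. by move=> Hf; have := Hf a u 0; rewrite !addr0 (lin0 _ Hf) addr0. Qed.
Lemma lin_sum f I (s : seq I) (g : I -> H) : lin f ->
  f (\sum_(i <- s) g i) = \sum_(i <- s) f (g i).
Proof. move=> Hf; elim: s => [|x s IH]; first by rewrite !big_nil (lin0 _ Hf).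
by rewrite !big_cons (linD _ _ _ Hf) IH. Qed.
Lemma lin_sumf I (s : seq I) (F : I -> H -> W) :
  (forall i, lin (F i)) -> lin (fun x => \sum_(i <- s) F i x).
Proof. move=> HF a u v; rewrite (eq_bigr _ (fun i _ => HF i a u v)).
by rewrite big_split /= scaler_sumr. Qed.
Lemma lin_comp f (g : H -> H) : @lin H g -> lin f -> lin (fun x => f (g x)).
Proof. by move=> Hg Hf a u v; rewrite Hg Hf. Qed.
Lemma lin_scal f c : lin f -> lin (fun x => c *: f x).
Proof. by move=> Hf a u v; rewrite Hf scalerDr !scalerA mulrC. Qed.
Lemma bilin_l (B : H -> H -> W) v : bilin B -> lin (B^~ v).
Proof. by case=> h1 _ a u u'; apply: h1. Qed.
Lemma bilin_r (B : H -> H -> W) u : bilin B -> lin (B u).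
Proof. by case=> _ h2 a v v'; apply: h2. Qed.
Lemma bilinP (B : H -> H -> W) : (forall v, lin (B^~ v)) -> (forall u, lin (B u)) -> bilin B.
Proof. by move=> h1 h2; split=> *; [apply: h1|apply: h2]. Qed.
Lemma trilinP (T : H -> H -> H -> W) : (forall b c, lin (fun a => T a b c)) ->
  (forall a c, lin (fun b => T a b c)) -> (forall a b, lin (fun c => T a b c)) -> trilin T.
Proof. by move=> h1 h2 h3; split=> *; [apply: h1|apply: h2|apply: h3]. Qed.
End Lin.

Lemma lin_mulr (c : H) : @lin H (fun x => x * c).
Proof. by move=> a u v; rewrite mulrDl scalerAl. Qed.
Lemma lin_mull (c : H) : @lin H (fun x => c * x).
Proof. by move=> a u v; rewrite mulrDr scalerAr. Qed.
Lemma lin_S : @lin H S.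
Proof. exact: hH.(S_lin). Qed.

Definition sw {W : lmodType k} (h : H) (F : H -> H -> W) : W :=
  \sum_(p <- cm h) F p.1 p.2.

Section SW.
Variable W : lmodType k.
Implicit Types F : H -> H -> W.

Lemma sw_teq F h s : teq2 s (cm h) -> bilin F -> \sum_(p <- s) F p.1 p.2 = sw h F.
Proof. by move=> e HF; apply: e. Qed.

Lemma lin_sw F : bilin F -> lin (fun h => sw h F).
Proof. move=> HF a u v; rewrite /sw (hH.(cm_lin) a u v HF) big_cat big_map /=.
congr (_ + _); rewrite scaler_sumr; apply: eq_bigr => p _.
by rewrite (linZ _ _ _ _ (bilin_l _ _ _ HF)). Qed.

Lemma sw_ext F G h : (forall a b, F a b = G a b) -> sw h F = sw h G.
Proof. by move=> e; apply: eq_bigr => p _; apply: e. Qed.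

Lemma sw_mul F u v : bilin F ->
  sw (u * v) F = sw u (fun a b => sw v (fun c d => F (a * c) (b * d))).
Proof. by move=> HF; rewrite /sw (hH.(cm_mul) u v HF) big_allpairs_dep. Qed.

Lemma sw_one F : bilin F -> sw 1 F = F 1 1.
Proof. by move=> HF; rewrite /sw (hH.(cm_1) HF) big_cons big_nil addr0. Qed.

Lemma sw_coassoc (T : H -> H -> H -> W) h : trilin T ->
  sw h (fun a b => sw a (fun c d => T c d b)) = sw h (fun a b => sw b (fun c d => T a c d)).
Proof. move=> HT; have := hH.(cm_coassoc) h HT.
by rewrite !big_allpairs_dep. Qed.

Lemma sw_counitl (G : H -> W) h : lin G -> sw h (fun a b => eps a *: G b) = G h.
Proof. move=> HG; rewrite -{2}(hH.(counitl) h) lin_sum //.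
by apply: eq_bigr => p _; rewrite linZ. Qed.
Lemma sw_counitr (G : H -> W) h : lin G -> sw h (fun a b => eps b *: G a) = G h.
Proof. move=> HG; rewrite -{2}(hH.(counitr) h) lin_sum //.
by apply: eq_bigr => p _; rewrite linZ. Qed.
Lemma sw_antil (G : H -> W) h : lin G -> sw h (fun a b => G (S a * b)) = eps h *: G 1.
Proof. by move=> HG; rewrite -linZ // -(hH.(antipodel) h) lin_sum. Qed.
Lemma sw_antir (G : H -> W) h : lin G -> sw h (fun a b => G (a * S b)) = eps h *: G 1.
Proof. by move=> HG; rewrite -linZ // -(hH.(antipoder) h) lin_sum. Qed.
Lemma sw_antil' (G : H -> W) F h : lin G -> (forall a b, F a b = G (S a * b)) -> sw h F = eps h *: G 1.
Proof. by move=> HG e; rewrite (sw_ext _ _ _ e) sw_antil. Qed.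
Lemma sw_antir' (G : H -> W) F h : lin G -> (forall a b, F a b = G (a * S b)) -> sw h F = eps h *: G 1.
Proof. by move=> HG e; rewrite (sw_ext _ _ _ e) sw_antir. Qed.
Lemma sw_counitl' (G : H -> W) F h : lin G -> (forall a b, F a b = eps a *: G b) -> sw h F = G h.
Proof. by move=> HG e; rewrite (sw_ext _ _ _ e) sw_counitl. Qed.
Lemma sw_counitr' (G : H -> W) F h : lin G -> (forall a b, F a b = eps b *: G a) -> sw h F = G h.
Proof. by move=> HG e; rewrite (sw_ext _ _ _ e) sw_counitr. Qed.
Lemma sw_exch h g (F : H -> H -> H -> H -> W) :
  sw h (fun a b => sw g (fun c d => F a b c d)) = sw g (fun c d => sw h (fun a b => F a b c d)).
Proof. exact: exchange_big. Qed.
Lemma sw_scal c F h : c *: sw h F = sw h (fun a b => c *: F a b).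
Proof. by rewrite /sw scaler_sumr. Qed.
Lemma sw_sum I (s : seq I) h (F : I -> H -> H -> W) :
  sw h (fun a b => \sum_(i <- s) F i a b) = \sum_(i <- s) sw h (F i).
Proof. exact: exchange_big. Qed.

Lemma lin_swf (h : H) (F : H -> H -> H -> W) :
  (forall a b, lin (fun x => F x a b)) -> lin (fun x => sw h (F x)).
Proof. by move=> HF; apply: lin_sumf => p; apply: HF. Qed.
End SW.

Lemma lin_idH : @lin H (fun x => x).
Proof. by []. Qed.
Lemma lin_mulR (f : H -> H) c : lin f -> lin (fun x => f x * c).
Proof. by move=> Hf a u v; rewrite Hf mulrDl scalerAl. Qed.
Lemma lin_mulL (f : H -> H) c : lin f -> lin (fun x => c * f x).
Proof. by move=> Hf a u v; rewrite Hf mulrDr scalerAr. Qed.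
Lemma lin_Sf (f : H -> H) : lin f -> lin (fun x => S (f x)).
Proof. by move=> Hf a u v; rewrite Hf lin_S. Qed.

Notation linK f := (@lin k^o f).
Lemma linK_mulR (f : H -> k) (c : k) : linK f -> linK (fun x => f x * c).
Proof. by move=> Hf a u v; rewrite Hf mulrDl -mulrA. Qed.
Lemma linK_mulL (f : H -> k) (c : k) : linK f -> linK (fun x => c * f x).
Proof. move=> Hf a u v; rewrite Hf mulrDr mulrA [c * a]mulrC -mulrA //. Qed.
Lemma linK_eps (f : H -> H) : lin f -> linK (fun x => eps (f x)).
Proof. by move=> Hf a u v; rewrite Hf hH.(eps_lin). Qed.
Lemma linK_app (n : H -> k) (f : H -> H) : linK n -> lin f -> linK (fun x => n (f x)).
Proof. by move=> Hn Hf a u v; rewrite Hf Hn. Qed.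
Lemma linK_sig1 (sig : H -> H -> k) (f : H -> H) c : bilinf sig -> lin f -> linK (fun x => sig (f x) c).
Proof. by case=> h1 _ Hf a u v; rewrite Hf h1. Qed.
Lemma linK_sig2 (sig : H -> H -> k) (f : H -> H) c : bilinf sig -> lin f -> linK (fun x => sig c (f x)).
Proof. by case=> _ h2 Hf a u v; rewrite Hf h2. Qed.

Definition sws (h : H) (F : H -> H -> k) : k := \sum_(p <- cm h) F p.1 p.2.
Notation bilK F := (@bilin k H k^o F).
Notation triK T := (@trilin k H k^o T).

Lemma linK_swsf (h : H) (F : H -> H -> H -> k) :
  (forall a b, linK (fun x => F x a b)) -> linK (fun x => sws h (F x)).
Proof. exact: (@lin_swf k^o h F). Qed.
Lemma linK_sws (F : H -> H -> k) : bilK F -> linK (fun h => sws h F).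
Proof. exact: (@lin_sw k^o F). Qed.
Lemma sws_teq F h s : teq2 s (cm h) -> bilK F -> \sum_(p <- s) F p.1 p.2 = sws h F.
Proof. by move=> e HF; apply: (e k^o F). Qed.
Lemma sws_ext F G h : (forall a b, F a b = G a b) -> sws h F = sws h G.
Proof. by move=> e; apply: eq_bigr => p _; apply: e. Qed.
Lemma sws_mul F u v : bilK F ->
  sws (u * v) F = sws u (fun a b => sws v (fun c d => F (a * c) (b * d))).
Proof. exact: (@sw_mul k^o F u v). Qed.
Lemma sws_one F : bilK F -> sws 1 F = F 1 1.
Proof. exact: (@sw_one k^o F). Qed.
Lemma sws_coassoc (T : H -> H -> H -> k) h : triK T ->
  sws h (fun a b => sws a (fun c d => T c d b)) = sws h (fun a b => sws b (fun c d => T a c d)).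
Proof. exact: (@sw_coassoc k^o T h). Qed.
Lemma sws_counitl (G : H -> k) h : linK G -> sws h (fun a b => eps a * G b) = G h.
Proof. exact: (@sw_counitl k^o G h). Qed.
Lemma sws_counitr (G : H -> k) h : linK G -> sws h (fun a b => eps b * G a) = G h.
Proof. exact: (@sw_counitr k^o G h). Qed.
Lemma sws_antil (G : H -> k) h : linK G -> sws h (fun a b => G (S a * b)) = eps h * G 1.
Proof. exact: (@sw_antil k^o G h). Qed.
Lemma sws_antir (G : H -> k) h : linK G -> sws h (fun a b => G (a * S b)) = eps h * G 1.
Proof. exact: (@sw_antir k^o G h). Qed.
Lemma sws_antil' (G : H -> k) F h : linK G -> (forall a b, F a b = G (S a * b)) -> sws h F = eps h * G 1.
Proof. by move=> HG e; rewrite (sws_ext _ _ _ e) sws_antil. Qed.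
Lemma sws_antir' (G : H -> k) F h : linK G -> (forall a b, F a b = G (a * S b)) -> sws h F = eps h * G 1.
Proof. by move=> HG e; rewrite (sws_ext _ _ _ e) sws_antir. Qed.
Lemma sws_counitl' (G : H -> k) F h : linK G -> (forall a b, F a b = eps a * G b) -> sws h F = G h.
Proof. by move=> HG e; rewrite (sws_ext _ _ _ e) sws_counitl. Qed.
Lemma sws_counitr' (G : H -> k) F h : linK G -> (forall a b, F a b = eps b * G a) -> sws h F = G h.
Proof. by move=> HG e; rewrite (sws_ext _ _ _ e) sws_counitr. Qed.
Lemma sws_exch h g (F : H -> H -> H -> H -> k) :
  sws h (fun a b => sws g (fun c d => F a b c d)) = sws g (fun c d => sws h (fun a b => F a b c d)).
Proof. exact: exchange_big. Qed.
Lemma sws_scal c F h : c * sws h F = sws h (fun a b => c * F a b).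
Proof. by rewrite /sws mulr_sumr. Qed.
Lemma sws_scalr c F h : sws h F * c = sws h (fun a b => F a b * c).
Proof. by rewrite /sws mulr_suml. Qed.
Lemma sws_sum I (s : seq I) h (F : I -> H -> H -> k) :
  sws h (fun a b => \sum_(i <- s) F i a b) = \sum_(i <- s) sws h (F i).
Proof. exact: exchange_big. Qed.

Lemma linK_swsh (F : H -> H -> k) (f : H -> H) : bilK F -> lin f -> linK (fun x => sws (f x) F).
Proof. by move=> HF Hf a u v; rewrite Hf (linK_sws _ HF). Qed.
Lemma lin_swh (F : H -> H -> H) (f : H -> H) : bilin F -> lin f -> lin (fun x => sw (f x) F).
Proof. by move=> HF Hf a u v; rewrite Hf (lin_sw _ _ HF). Qed.

Ltac slin := repeat (cbv beta; first
  [ apply: lin_idH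
  | apply: linK_swsf
  | apply: lin_swf
  | apply: linK_swsh
  | apply: lin_swh
  | apply: lin_mulR
  | apply: lin_mulL
  | apply: lin_Sf
  | apply: linK_mulR
  | apply: linK_mulL
  | apply: linK_eps
  | apply: linK_sig1; [assumption|]
  | apply: linK_sig2; [assumption|]
  | apply: linK_app; [assumption|]
  | apply: lin_scal
  | apply: bilinP
  | apply: trilinP
  | assumption
  | intro ]).
Ltac sbil := slin.

Lemma S1 : S 1 = 1.
Proof. have := hH.(antipodel) 1; rewrite hH.(eps_1) scale1r.
rewrite -[LHS]/(sw 1 (fun a b => S a * b)) sw_one; first by rewrite mulr1.
by sbil. Qed.

Lemma epsS h : eps (S h) = eps h.
Proof.
rewrite -(sws_counitr (fun x => eps (S x))); last by slin.
rewrite (sws_ext _ (fun a b => eps (S a * b))); last by move=> a b; rewrite hH.(eps_mul) mulrC.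
rewrite (sws_antil eps) ?hH.(eps_1) ?mulr1 //; exact: hH.(eps_lin).
Qed.

Lemma S_mul u v : S (u * v) = S v * S u.
Proof.
pose R u1 u2 u3 v1 v2 v3 := S (u1 * v1) * (u2 * v2) * S v3 * S u3.
pose Q u1 u2 u3 := sw v (fun v1 v' => sw v' (fun v2 v3 => R u1 u2 u3 v1 v2 v3)).
have trQ : trilin Q by rewrite /Q /R; sbil.
pose P := sw u (fun u1 u' => sw u' (fun u2 u3 => Q u1 u2 u3)).
have e1 : P = S (u * v).
  have i1 : forall u1 u2 u3 v1 v', sw v' (fun v2 v3 => R u1 u2 u3 v1 v2 v3)
      = eps v' *: (S (u1 * v1) * u2 * S u3).
    move=> u1 u2 u3 v1 v'.
    rewrite (sw_antir' _ (fun w => S (u1 * v1) * u2 * w * S u3)) ?mulr1 //; first by slin.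
    by move=> a b; rewrite /R !mulrA.
  have i2 : forall u1 u2 u3, Q u1 u2 u3 = S (u1 * v) * u2 * S u3.
    move=> u1 u2 u3; rewrite /Q.
    by rewrite (sw_counitr' _ (fun x => S (u1 * x) * u2 * S u3)) //; slin.
  rewrite /P; under sw_ext => u1 u' do under sw_ext => u2 u3 do rewrite i2.
  under sw_ext => u1 u'.
    rewrite (sw_antir' _ (fun w => S (u1 * v) * w)); last 2 first.
      by slin.
      by move=> a b; rewrite mulrA.
    rewrite mulr1.
    over.
  by rewrite (sw_counitr' _ (fun x => S (x * v))) //; slin.
have e2 : P = S v * S u.
  rewrite /P -(sw_coassoc _ Q) //.
  have i1 : forall u1 u2 u3, Q u1 u2 u3 =
     sw v (fun v' v3 => sw v' (fun v1 v2 => R u1 u2 u3 v1 v2 v3)).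
    move=> u1 u2 u3; rewrite /Q -(sw_coassoc _ (R u1 u2 u3)) //; rewrite /R; sbil.
  under sw_ext => u' u3 do under sw_ext => u1 u2 do rewrite i1.
  under sw_ext => u' u3.
    rewrite sw_exch.
    under sw_ext => v' v3.
      rewrite -(sw_mul _ (fun a b => S a * b * S v3 * S u3)); last by sbil.
      rewrite (sw_antil' _ (fun w => w * S v3 * S u3)) //; last by slin.
      rewrite hH.(eps_mul) mul1r mulrC -scalerA.
      over.
    rewrite (sw_counitl' _ (fun x => eps u' *: (S x * S u3))) //; last by slin.
    over.
  rewrite (sw_counitl' _ (fun x => S v * S x)) //; slin.
by rewrite -e1 e2.
Qed.

Lemma S_E (B : H -> H -> k) c d g : bilK B ->
  eps g * B c d = sws g (fun u z => sws u (fun g1 g2 => sws z (fun g3 g4 =>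
      B (c * g1 * S g4) (d * g2 * S g3)))).
Proof.
move=> HB.
have l1 : forall v, linK (B^~ v) by move=> v; apply: bilin_l.
have l2 : forall u, linK (B u) by move=> u; apply: bilin_r.
rewrite (sws_coassoc (fun g1 g2 z => sws z (fun g3 g4 => B (c * g1 * S g4) (d * g2 * S g3)))); last by sbil.
under sws_ext => g1 y.
  rewrite -(sws_coassoc (fun g2 g3 g4 => B (c * g1 * S g4) (d * g2 * S g3))); last by sbil.
  under sws_ext => v g4.
    rewrite (sws_antir' (fun w => B (c * g1 * S g4) (d * w))); last 2 first.
      by slin.
      by move=> a b; rewrite mulrA.
    over.
  rewrite (sws_counitl' (fun x => B (c * g1 * S x) (d * 1))) //; last by slin.
  over.
rewrite (sws_antir' (fun w => B (c * w) (d * 1))); last 2 first.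
  by slin.
  by move=> a b; rewrite mulrA.
by rewrite !mulr1.
Qed.

Lemma S_cm (B : H -> H -> k) h : bilK B ->
  sws (S h) B = sws h (fun a b => B (S b) (S a)).
Proof.
move=> HB.
have l1 : forall v, linK (B^~ v) by move=> v; apply: bilin_l.
have l2 : forall u, linK (B u) by move=> u; apply: bilin_r.
rewrite -(sws_counitr' (fun x => sws (S x) B) (fun h1 h' => eps h' * sws (S h1) B)) //; last first.
  by apply: linK_swsh => //; exact: lin_S.
under sws_ext => h1 h'.
  rewrite sws_scal.
  under sws_ext => a1 a2 do rewrite (S_E _ a1 a2 h' HB).
  rewrite sws_exch.
  over.
pose T h1 u z := sws (S h1) (fun a1 a2 => sws u (fun g1 g2 => sws z (fun g3 g4 =>
      B (a1 * g1 * S g4) (a2 * g2 * S g3)))).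
rewrite -(sws_coassoc T); last by rewrite /T; sbil.
under sws_ext => w z.
  under sws_ext => h1 u.
    rewrite /T -(sws_mul (fun c d => sws z (fun g3 g4 => B (c * S g4) (d * S g3)))); last by sbil.
    over.
  rewrite (sws_antil' (fun x => sws x (fun c d => sws z (fun g3 g4 => B (c * S g4) (d * S g3))))) //; last by sbil.
  rewrite sws_one; last by sbil.
  over.
rewrite (sws_counitl' (fun z => sws z (fun g3 g4 => B (1 * S g4) (1 * S g3)))) //; last by sbil.
by apply: sws_ext => a b; rewrite !mul1r.
Qed.

Variable sigma : H -> H -> k.
Hypothesis hsig : is_cqt cm eps sigma.
Variable Sinv : H -> H.
Hypotheses (hSK : cancel S Sinv) (hSKV : cancel Sinv S).

Let sigb : bilinf sigma := hsig.(cqt_bilin).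

Lemma lin_Sinv : @lin H Sinv.
Proof. move=> a u v; apply: (can_inj hSK); by rewrite hSKV lin_S !hSKV. Qed.
Lemma lin_Sinvf (f : H -> H) : lin f -> lin (fun x => Sinv (f x)).
Proof. by move=> Hf a u v; rewrite Hf lin_Sinv. Qed.
Lemma Sinv_mul u v : Sinv (u * v) = Sinv v * Sinv u.
Proof. by apply: (can_inj hSK); rewrite S_mul !hSKV. Qed.
Lemma Sinv1 : Sinv 1 = 1.
Proof. by rewrite -{1}S1 hSK. Qed.
Lemma epsSinv h : eps (Sinv h) = eps h.
Proof. by rewrite -{2}(hSKV h) epsS. Qed.

Lemma linK_lfun x : linK (lfun sigma x).
Proof. by move=> a u v; rewrite /lfun sigb.1. Qed.
Lemma linK_rfun x : linK (rfun sigma x).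
Proof. by move=> a u v; rewrite /rfun sigb.2. Qed.
Lemma linK_conv f g : linK f -> linK g -> linK (conv cm f g).
Proof. move=> Hf Hg; apply: (linK_sws (fun a b => f a * g b)); by sbil. Qed.

Lemma convE f g h : conv cm f g h = sws h (fun a b => f a * g b).
Proof. by []. Qed.
Lemma conv_ext f f' g g' h : (forall x, f x = f' x) -> (forall x, g x = g' x) ->
  conv cm f g h = conv cm f' g' h.
Proof. by move=> e1 e2; apply: eq_bigr => p _; rewrite e1 e2. Qed.
Lemma conv_sumr I (s : seq I) f (G : I -> H -> k) h :
  conv cm f (fun w => \sum_(i <- s) G i w) h = \sum_(i <- s) conv cm f (G i) h.
Proof. rewrite /conv; under eq_bigr => p _ do rewrite mulr_sumr; exact: exchange_big. Qed.
Lemma conv_suml I (s : seq I) g (G : I -> H -> k) h :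
  conv cm (fun w => \sum_(i <- s) G i w) g h = \sum_(i <- s) conv cm (G i) g h.
Proof. rewrite /conv; under eq_bigr => p _ do rewrite mulr_suml; exact: exchange_big. Qed.
Lemma conv_assoc f g g' h : linK f -> linK g -> linK g' ->
  conv cm (conv cm f g) g' h = conv cm f (conv cm g g') h.
Proof.
move=> Hf Hg Hg'; rewrite !convE.
under sws_ext => a b do rewrite convE sws_scalr.
rewrite (sws_coassoc (fun c d b => f c * g d * g' b)); last by sbil.
by apply: sws_ext => a b; rewrite convE sws_scal; apply: sws_ext => c d; rewrite mulrA.
Qed.
Lemma lfun_mul u v h : lfun sigma (u * v) h = conv cm (lfun sigma v) (lfun sigma u) h.
Proof. rewrite /lfun hsig.(cqt_mulr) /conv; apply: eq_bigr => p _; by rewrite mulrC. Qed.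

Lemma linK_sum (f : H -> k) I (s : seq I) (g : I -> H) : linK f ->
  f (\sum_(i <- s) g i) = \sum_(i <- s) f (g i).
Proof. move=> Hf; elim: s => [|x s IH]; first by rewrite !big_nil (lin0 k^o f Hf).
by rewrite !big_cons (linD k^o f _ _ Hf) IH. Qed.
Lemma linK_Z (f : H -> k) a u : linK f -> f (a *: u) = a * f u.
Proof. by move=> Hf; have := Hf a u 0; rewrite !addr0 (lin0 k^o f Hf) addr0. Qed.

Lemma comm_n (m : H -> k) h y : linK m ->
  sws h (fun c1 c2 => sws y (fun q1 q2 => sigma c1 q1 * m (c2 * q2))) =
  sws h (fun c1 c2 => sws y (fun q1 q2 => sigma c2 q2 * m (q1 * c1))).
Proof.
move=> Hm; have := congr1 m (hsig.(cqt_comm) h y).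
rewrite !linK_sum //.
under eq_bigr => p _ do rewrite linK_sum //.
under [in RHS]eq_bigr => p _ do rewrite linK_sum //.
under eq_bigr => p _ do under eq_bigr => q _ do rewrite linK_Z //.
by under [in RHS]eq_bigr => p _ do under eq_bigr => q _ do rewrite linK_Z //.
Qed.

Ltac slin2 := repeat (cbv beta; first
  [ apply: lin_idH
  | apply: linK_swsf
  | apply: lin_swf
  | apply: linK_swsh
  | apply: lin_swh
  | apply: lin_mulR
  | apply: lin_mulL
  | apply: lin_Sf
  | apply: lin_Sinvf
  | apply: linK_mulR
  | apply: linK_mulL
  | apply: linK_eps
  | apply: linK_sig1; [exact: sigb|]
  | apply: linK_sig2; [exact: sigb|]
  | apply: linK_app; [assumption|]
  | apply: linK_conv
  | apply: linK_lfun
  | apply: linK_rfun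
  | apply: lin_scal
  | apply: bilinP
  | apply: trilinP
  | assumption
  | intro ]).

Lemma K2 n x h : linK n ->
  \sum_(r <- delta2 cm x) conv cm (fun w => n (Sinv r.2 * w * r.1.1)) (lfun sigma (Sinv r.1.2)) h
  = conv cm (lfun sigma (Sinv x)) n h.
Proof.
move=> Hn; rewrite /delta2 big_allpairs_dep /=.
change (sws x (fun p1 p2 => sws p1 (fun q1 q2 => sws h (fun c1 c2 =>
   n (Sinv p2 * c1 * q1) * sigma c2 (Sinv q2)))) = conv cm (lfun sigma (Sinv x)) n h).
rewrite -{1}(hSKV x) S_cm; last by slin2.
under sws_ext => a b.
  rewrite S_cm; last by slin2.
  under sws_ext => b1 b2 do under sws_ext => c1 c2 do rewrite !hSK.
  over.
set z := Sinv x.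
rewrite -(sws_coassoc (fun s1 s2 s3 => sws h (fun c1 c2 => n (s1 * c1 * S s3) * sigma c2 s2))); last by slin2.
under sws_ext => y s3.
  rewrite sws_exch.
  have Hm : linK (fun w => n (w * S s3)) by slin2.
  have e := comm_n _ h y Hm; cbv beta in e.
  rewrite (sws_ext _ (fun c1 c2 => sws y (fun q1 q2 => sigma c2 q2 * n (q1 * c1 * S s3)))); last first.
    by move=> *; apply: sws_ext => *; rewrite mulrC.
  rewrite -e.
  over.
cbv beta.
rewrite sws_exch.
under sws_ext => c1 c2.
  rewrite (sws_coassoc (fun q1 q2 s3 => sigma c1 q1 * n (c2 * q2 * S s3))); last by slin2.
  under sws_ext => s1 y'.
    rewrite (sws_antir' (fun w => sigma c1 s1 * n (c2 * w))); last 2 first.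
      by slin2.
      by move=> *; rewrite mulrA.
    over.
  rewrite (sws_counitr' (fun x => sigma c1 x * n (c2 * 1))) //; last by slin2.
  over.
by rewrite convE; apply: sws_ext => *; rewrite mulr1.
Qed.

Lemma Mterm m n x y h : linK m -> linK n ->
  \sum_(r <- delta2 cm x) conv cm (conv cm m (fun w => n (Sinv r.2 * w * r.1.1)))
        (lfun sigma (Sinv (r.1.2 * y))) h
  = conv cm (conv cm m (lfun sigma (Sinv x))) (conv cm n (lfun sigma (Sinv y))) h.
Proof.
move=> Hm Hn.
transitivity (\sum_(r <- delta2 cm x) conv cm m (conv cm (conv cm
   (fun w => n (Sinv r.2 * w * r.1.1)) (lfun sigma (Sinv r.1.2))) (lfun sigma (Sinv y))) h).
  apply: eq_bigr => r _.
  rewrite (conv_ext _ (conv cm m (fun w => n (Sinv r.2 * w * r.1.1))) _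
     (conv cm (lfun sigma (Sinv r.1.2)) (lfun sigma (Sinv y))) h) //; last first.
    by move=> w; rewrite Sinv_mul lfun_mul.
  rewrite conv_assoc; [|slin2..].
  by apply: conv_ext => // w; rewrite conv_assoc //; slin2.
rewrite -conv_sumr.
rewrite (conv_ext _ m _ (conv cm (lfun sigma (Sinv x)) (conv cm n (lfun sigma (Sinv y)))) h) //.
  by rewrite conv_assoc //; slin2.
move=> w; rewrite -conv_suml -conv_assoc; [|slin2..].
apply: conv_ext => // v; exact: K2.
Qed.

Lemma K1 n z h : linK n ->
  sws h (fun c1 c2 => n c1 * sigma c2 z) =
  sws z (fun z1 z' => sws z' (fun z2 z3 => sws h (fun c1 c2 => sigma c1 z2 * n (S z1 * c2 * z3)))).
Proof.
move=> Hn; symmetry.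
under sws_ext => z1 z'.
  rewrite sws_exch.
  have Hm : linK (fun w => n (S z1 * w)) by slin2.
  have e := comm_n _ h z' Hm; cbv beta in e.
  rewrite (sws_ext _ (fun c1 c2 => sws z' (fun q1 q2 => sigma c1 q1 * n (S z1 * (c2 * q2))))); last first.
    by move=> *; apply: sws_ext => *; rewrite mulrA.
  rewrite e.
  over.
rewrite sws_exch.
under sws_ext => c1 c2.
  rewrite -(sws_coassoc (fun z1 q1 q2 => sigma c2 q2 * n (S z1 * (q1 * c1)))); last by slin2.
  under sws_ext => y z3.
    rewrite (sws_antil' (fun w => sigma c2 z3 * n (w * c1))); last 2 first.
      by slin2.
      by move=> *; rewrite mulrA.
    over.
  rewrite (sws_counitl' (fun x => sigma c2 x * n (1 * c1))) //; last by slin2.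
  over.
by apply: sws_ext => *; rewrite mul1r mulrC.
Qed.

Lemma Kform a z h : conv cm (rfun sigma a) (lfun sigma z) h =
  sws z (fun z1 z' => sws z' (fun z2 z3 => sws a (fun a1 a' => sws a' (fun a21 a22 =>
    sigma a22 (S z1) * sigma a1 z3 * sws h (fun c1 c2 => sigma c1 z2 * sigma a21 c2))))).
Proof.
rewrite convE (K1 (rfun sigma a)); last by slin2.
apply: sws_ext => z1 z'; apply: sws_ext => z2 z3.
rewrite /rfun /sws.
under eq_bigr => p _ do rewrite hsig.(cqt_mulr).
under eq_bigr => p _ do under eq_bigr => q _ do rewrite hsig.(cqt_mulr).
transitivity (\sum_(p <- cm h) \sum_(q <- cm a) \sum_(q' <- cm q.2)
   (sigma p.1 z2 * (sigma q'.2 (S z1) * sigma q'.1 p.2) * sigma q.1 z3)).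
  apply: eq_bigr => p _; rewrite mulr_sumr; apply: eq_bigr => q _.
  rewrite mulr_suml mulr_sumr; apply: eq_bigr => q' _; ring.
rewrite exchange_big; apply: eq_bigr => q _.
rewrite exchange_big; apply: eq_bigr => q' _.
rewrite mulr_sumr; apply: eq_bigr => p _; ring.
Qed.

Variables X A : H -> Prop.
Hypotheses (hX : sub_hopf cm S Sinv X) (hA : sub_hopf cm S Sinv A).
Notation U := (inHXA cm sigma X A).

Lemma U_lin f : U f -> linK f.
Proof.
case=> l [_ e] a u v; rewrite !e.
rewrite (eq_bigr _ (fun p _ => linK_conv _ _ (linK_lfun p.1) (linK_rfun p.2) a u v)).
by rewrite big_split /=; congr (_ + _); rewrite -[RHS]/(a * _) mulr_sumr.
Qed.

Lemma Uext f g : U f -> (forall h, f h = g h) -> U g.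
Proof. by case=> l [Hl e] e'; exists l; split=> // h; rewrite -e' e. Qed.

Lemma Usum I (s : seq I) (F : I -> H -> k) :
  (forall i, List.In i s -> U (F i)) -> U (fun h => \sum_(i <- s) F i h).
Proof.
elim: s => [|x s IH] HF.
  by exists [::]; split=> // h; rewrite !big_nil.
have [l1 [H1 e1]] := HF x (or_introl erefl).
have [l2 [H2 e2]] := IH (fun i Hi => HF i (or_intror Hi)).
exists (l1 ++ l2); split.
  by move=> p Hp; case: (List.in_app_or _ _ _ Hp) => ?; [apply: H1|apply: H2].
by move=> h; rewrite big_cons big_cat e1 e2.
Qed.

Lemma sub0 P : sub_hopf cm S Sinv P -> P 0.
Proof. move=> hP; have := hP.(sh_lin) (-1) hP.(sh_1) hP.(sh_1).
by rewrite scaleN1r addNr. Qed.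

Lemma Uscale c f : U f -> U (fun h => c * f h).
Proof.
case=> l [Hl e]; exists [seq (c *: p.1, p.2) | p <- l]; split.
  move=> p /List.in_map_iff [q [<- Hq]] /=; have [? ?] := Hl q Hq; split=> //.
  by rewrite -[c *: _]addr0; apply: hX.(sh_lin) => //; exact: sub0.
move=> h; rewrite e big_map mulr_sumr; apply: eq_bigr => p _ /=.
rewrite !convE sws_scal; apply: sws_ext => a b.
have sZ : sigma a (c *: p.1) = c * sigma a p.1 := linK_Z (rfun sigma a) c p.1 (linK_rfun a).
by rewrite /lfun sZ mulrA.
Qed.

Lemma Ugen x a : X x -> A a -> U (conv cm (lfun sigma x) (rfun sigma a)).
Proof.
move=> Hx Ha; exists [:: (x, a)]; split.
  by move=> p [<-|[]].
by move=> h; rewrite big_cons big_nil addr0.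
Qed.

Lemma Ul x f : X x -> U f -> U (conv cm (lfun sigma x) f).
Proof.
move=> Hx Uf; have Lf := U_lin _ Uf; case: Uf => l [Hl e].
apply: (Uext (fun h => \sum_(p <- l) conv cm (lfun sigma (p.1 * x)) (rfun sigma p.2) h)).
  apply: Usum => p Hp; have [? ?] := Hl p Hp; apply: Ugen => //; exact: hX.(sh_mul).
move=> h; rewrite (conv_ext _ (lfun sigma x) _ _ h (fun _ => erefl) e) conv_sumr.
apply: eq_bigr => p _; rewrite -conv_assoc; [|slin2..].
by apply: conv_ext => // w; rewrite lfun_mul.
Qed.

Lemma Usw P (hP : sub_hopf cm S Sinv P) z (F : H -> H -> H -> k) : P z ->
  (forall h, bilK (F h)) -> (forall z1 z2, P z1 -> P z2 -> U (fun h => F h z1 z2)) ->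
  U (fun h => sws z (F h)).
Proof.
move=> Hz HF HU; have [sz [Hs ez]] := hP.(sh_cm) Hz.
apply: (Uext (fun h => \sum_(p <- sz) F h p.1 p.2)); last first.
  by move=> h; rewrite (sws_teq _ _ _ ez).
apply: (Usum _ sz (fun p h => F h p.1 p.2)) => p Hp; have [? ?] := Hs p Hp; exact: HU.
Qed.

Lemma Ukey a z : A a -> X z -> U (conv cm (rfun sigma a) (lfun sigma z)).
Proof.
move=> Ha Hz.
apply: (Uext (fun h => sws z (fun z1 z' => sws z' (fun z2 z3 => sws a (fun a1 a' => sws a' (fun a21 a22 =>
    sigma a22 (S z1) * sigma a1 z3 * sws h (fun c1 c2 => sigma c1 z2 * sigma a21 c2))))))); last first.
  by move=> h; rewrite Kform.
apply: (Usw _ hX) => // [h|z1 z' Hz1 Hz']; first by slin2.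
apply: (Usw _ hX) => // [h|z2 z3 Hz2 Hz3]; first by slin2.
apply: (Usw _ hA) => // [h|a1 a' Ha1 Ha']; first by slin2.
apply: (Usw _ hA) => // [h|a21 a22 Ha21 Ha22]; first by slin2.
apply: Uscale; exact: (Ugen _ _ Hz2 Ha21).
Qed.

Lemma Ur f z : U f -> X z -> U (conv cm f (lfun sigma z)).
Proof.
move=> Uf Hz; have Lf := U_lin _ Uf; case: Uf => l [Hl e].
apply: (Uext (fun h => \sum_(p <- l) conv cm (lfun sigma p.1) (conv cm (rfun sigma p.2) (lfun sigma z)) h)).
  apply: Usum => p Hp; have [? ?] := Hl p Hp; apply: Ul => //; exact: Ukey.
move=> h; rewrite (conv_ext _ _ (lfun sigma z) (lfun sigma z) h e (fun _ => erefl)) conv_suml.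
by apply: eq_bigr => p _; rewrite conv_assoc //; slin2.
Qed.

Lemma big_In_eq I (s : seq I) (F G : I -> k) :
  (forall i, List.In i s -> F i = G i) -> \sum_(i <- s) F i = \sum_(i <- s) G i.
Proof.
elim: s => [|x s IH] e; first by rewrite !big_nil.
by rewrite !big_cons e ?IH //; [move=> i Hi; apply: e; right|left].
Qed.

Lemma piD1 x c : piD cm sigma Sinv [:: x] c = conv cm x.1 (lfun sigma (Sinv x.2)) c.
Proof. by rewrite /piD big_cons big_nil addr0. Qed.

Lemma lfun1 b : lfun sigma 1 b = eps b.
Proof. by rewrite /lfun (hsig.(cqt_unit) b).2. Qed.

Lemma P1 t : inD cm sigma X A t -> U (piD cm sigma Sinv t).
Proof.
move=> Dt; rewrite /piD.
apply: (Usum _ t (fun p => conv cm p.1 (lfun sigma (Sinv p.2)))) => p Hp.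
have [Up Xp] := Dt p Hp; apply: Ur => //; exact: hX.(sh_Sinv).
Qed.

Lemma P2 h : piD cm sigma Sinv [:: (eps, 1)] h = eps h.
Proof.
rewrite piD1 /= Sinv1 convE.
under sws_ext => a b do rewrite lfun1.
by apply: sws_counitl; exact: hH.(eps_lin).
Qed.

Lemma P6 f : U f -> forall h, piD cm sigma Sinv [:: (f, 1)] h = f h.
Proof.
move=> Uf h; rewrite piD1 /= Sinv1 convE.
under sws_ext => a b do rewrite lfun1 mulrC.
by apply: sws_counitr; exact: U_lin.
Qed.

Lemma P5 t : inD cm sigma X A t -> piD cm sigma Sinv t 1 = \sum_(p <- t) p.1 1 * eps p.2.
Proof.
move=> Dt; rewrite /piD; apply: big_In_eq => p Hp.
have [Up _] := Dt p Hp; have Lp := U_lin _ Up.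
rewrite convE sws_one; last by slin2.
by rewrite /lfun (hsig.(cqt_unit) _).1 epsSinv.
Qed.

Lemma P3 t t' : inD cm sigma X A t -> inD cm sigma X A t' ->
  forall h, piD cm sigma Sinv (mulD cm Sinv t t') h =
            conv cm (piD cm sigma Sinv t) (piD cm sigma Sinv t') h.
Proof.
move=> Dt Dt' h; rewrite /piD /mulD big_flatten big_map conv_suml.
apply: big_In_eq => p Hp; rewrite big_flatten big_map.
rewrite conv_sumr.
apply: big_In_eq => q Hq; rewrite big_map /=.
have [Up _] := Dt p Hp; have [Uq _] := Dt' q Hq.
exact: Mterm (U_lin _ Up) (U_lin _ Uq).
Qed.

Lemma P4 dm : (forall f, U f -> dual_cm_rep U f (dm f)) ->
  forall t, inD cm sigma X A t -> forall a b,
  \sum_(u <- deltaD cm dm t) piD cm sigma Sinv [:: u.2] a * piD cm sigma Sinv [:: u.1] b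
    = piD cm sigma Sinv t (a * b).
Proof.
move=> Hdm t Dt a b; rewrite /deltaD big_flatten big_map [RHS]/piD.
apply: big_In_eq => p Hp; rewrite big_allpairs_dep /=.
under eq_bigr => r _ do under eq_bigr => q _ do rewrite !piD1 /=.
have [Up _] := Dt p Hp; have Lp := U_lin _ Up; have [Hr edm] := Hdm _ Up.
rewrite convE sws_mul; last by slin2.
under sws_ext => a1 a2 do under sws_ext => b1 b2 do rewrite edm /lfun hsig.(cqt_mull).
transitivity (\sum_(r <- dm p.1) sws (Sinv p.2) (fun w1 w2 =>
   sws a (fun a1 a2 => r.1 a1 * sigma a2 w1) * sws b (fun b1 b2 => r.2 b1 * sigma b2 w2))).
  apply: big_In_eq => r Hr'; have [U1 U2] := Hr r Hr'.
  have L1 := U_lin _ U1; have L2 := U_lin _ U2.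
  rewrite -{1}(hSKV p.2).
  transitivity (sws (S (Sinv p.2)) (fun q1 q2 => sws a (fun a1 a2 => r.1 a1 * sigma a2 (Sinv q2)) *
      sws b (fun b1 b2 => r.2 b1 * sigma b2 (Sinv q1)))); first by [].
  rewrite S_cm; last by slin2.
  by apply: sws_ext => w1 w2; rewrite !hSK.
set w := Sinv p.2; rewrite /sws.
transitivity (\sum_(r <- dm p.1) \sum_(q <- cm w) \sum_(x <- cm a) \sum_(y <- cm b)
   (r.1 x.1 * sigma x.2 q.1 * (r.2 y.1 * sigma y.2 q.2))).
  apply: eq_bigr => r _; apply: eq_bigr => q _; rewrite mulr_suml; apply: eq_bigr => x _.
  by rewrite mulr_sumr.
symmetry.
under eq_bigr => x _ do under eq_bigr => y _ do rewrite mulr_suml.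
under eq_bigr => x _ do under eq_bigr => y _ do under eq_bigr => r _ do rewrite mulr_sumr.
under eq_bigr => x _ do rewrite exchange_big.
under eq_bigr => x _ do under eq_bigr => r _ do rewrite exchange_big.
rewrite exchange_big.
under eq_bigr => r _ do rewrite exchange_big.
apply: eq_bigr => r _; apply: eq_bigr => q _; apply: eq_bigr => x _; apply: eq_bigr => y _.
ring.
Qed.

End Frame.

Theorem proposition1p5 (k : fieldType) (H : algType k)
    (cm : H -> seq (H * H)) (eps : H -> k) (S Sinv : H -> H)
    (hH : is_hopf cm eps S) (hSK : cancel S Sinv) (hSKV : cancel Sinv S)
    (sigma : H -> H -> k) (hsig : is_cqt cm eps sigma)
    (X A : H -> Prop) (hX : sub_hopf cm S Sinv X) (hA : sub_hopf cm S Sinv A) :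
  let U := inHXA cm sigma X A in
  let D := inD cm sigma X A in
  let pi := piD cm sigma Sinv in
  (* π takes values in H_{X,A} *)
  (forall t, D t -> U (pi t)) /\
  (* π is unital: π(1 ⊗ 1) = 1_{H^0} = ε *)
  (forall h, pi [:: (eps, 1)] h = eps h) /\
  (* π is multiplicative *)
  (forall t t', D t -> D t' ->
     forall h, pi (mulD cm Sinv t t') h = conv cm (pi t) (pi t') h) /\
  (* π is comultiplicative: (π ⊗ π) ∘ Δ_D = Δ^cop ∘ π *)
  (forall dm : (H -> k) -> seq ((H -> k) * (H -> k)),
     (forall f, U f -> dual_cm_rep U f (dm f)) ->
     forall t, D t -> forall a b,
       \sum_(u <- deltaD cm dm t) pi [:: u.2] a * pi [:: u.1] b = pi t (a * b)) /\
  (* π is counital: ε_{H^0}(π t) = ε_D(t), with ε_{H^0}(φ) = φ(1) *)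
  (forall t, D t -> pi t 1 = \sum_(p <- t) p.1 1 * eps p.2) /\
  (* π ∘ i = Id *)
  (forall f, U f -> forall h, pi [:: (f, 1)] h = f h).
Proof.
move=> U D pi.
split; [|split; [|split; [|split; [|split]]]].
- by move=> t Dt; eapply P1; eauto.
- by move=> h; eapply P2; eauto.
- by move=> t t' Dt Dt' h; eapply P3; eauto.
- by move=> dm Hdm t Dt a b; eapply P4; eauto.
- by move=> t Dt; eapply P5; eauto.
- by move=> f Uf h; eapply P6; eauto.
Qed.
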